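(* Let $M$ be an adequate monoid, $\chi:\Sigma\to M$ a function and $\rho$ the map defined below. For every $\Sigma$-tree $X$, $\rho(X)=\rho(\overline{X})$, where $\overline{X}$ is (any representative of) the pruning of $X$.
   Context: Adequate monoid: a monoid $M$ whose idempotents commute and in which every $\mathcal{L}^*$-class and every $\mathcal{R}^*$-class contains an idempotent, where $a\,\mathcal{L}^*\,b$ iff ($ax=ay\Leftrightarrow bx=by$ for all $x,y\in M$) and $a\,\mathcal{R}^*\,b$ iff ($xa=ya\Leftrightarrow xb=yb$ for all $x,y\in M$); $x^+$ and $x^*$ denote the unique idempotents $\mathcal{R}^*$- and $\mathcal{L}^*$-related to $x$. Trees: a $\Sigma$-tree is a finite directed graph whose underlying undirected graph is a tree, each edge $e$ having initial vertex $\alpha(e)$, terminal vertex $\omega(e)$ and label $\lambda(e)\in\Sigma$, with distinguished start and end vertices such that there is a (possibly empty) directed path (the trunk) from start to end vertex; idempotent if start equals end vertex. A morphism $X\to Y$ maps vertices to vertices and edges to edges preserving $\alpha,\omega,\lambda$ and start/end vertices; isomorphisms are bijective morphisms. A retraction is an idempotent morphism $X\to X$, its image a retract; $X$ is pruned if it has no non-identity retraction. Every tree has a pruned retract, unique up to isomorphism; its isomorphism type is $\overline{X}$. $\tau$ (on idempotent trees, values idempotents of $M$) is defined recursively: $\tau(X)=1$ if $X$ has no edges; otherwise with $v$ the start (= end) vertex, for each edge $e$ with $\alpha(e)=v$ let $X_e$ be the component of $X$ minus $e$ containing $\omega(e)$, as an idempotent tree at $\omega(e)$, and for each edge $e$ with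 $\omega(e)=v$ let $X_e$ be the component of $X$ minus $e$ containing $\alpha(e)$, as an idempotent tree at $\alpha(e)$; then $\tau(X)=\prod_{e:\alpha(e)=v}[\chi(\lambda(e))\tau(X_e)]^+\cdot\prod_{e:\omega(e)=v}[\tau(X_e)\chi(\lambda(e))]^*$ (commuting idempotents, order irrelevant). For any tree $X$ with trunk vertices $v_0,\dots,v_n$ in order and $a_i$ the label of the trunk edge from $v_{i-1}$ to $v_i$, let $X_i$ be the component containing $v_i$ of $X$ with all trunk edges removed, as an idempotent tree at $v_i$; $\rho(X)=\tau(X_0)\chi(a_1)\tau(X_1)\cdots\chi(a_n)\tau(X_n)$. Both depend only on isomorphism type. *)

(* Defs.v *)
From HB Require Import structures.
From mathcomp Require Import all_boot.
From Stdlib Require Import ClassicalEpsilon.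

Set Implicit Arguments.
Unset Strict Implicit.
Unset Printing Implicit Defensive.

Record monoid := Monoid {
  mcarrier :> Type;
  mmul : mcarrier -> mcarrier -> mcarrier;
  mone : mcarrier;
  mmulA : forall x y z, mmul x (mmul y z) = mmul (mmul x y) z;
  mmul1l : forall x, mmul mone x = x;
  mmul1r : forall x, mmul x mone = x
}.

Section MonoidDefs.
Variable M : monoid.
Local Notation "x * y" := (mmul x y).
Local Notation "1" := (mone M).

Definition idempotent (e : M) : Prop := e * e = e.

Definition Lstar (a b : M) : Prop :=
  forall x y : M, a * x = a * y <-> b * x = b * y.

Definition Rstar (a b : M) : Prop :=
  forall x y : M, x * a = y * a <-> x * b = y * b.

Definition adequate : Prop :=
  [/\ (forall e f : M, idempotent e -> idempotent f -> e * f = f * e),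
      (forall a : M, exists e, idempotent e /\ Lstar a e) &
      (forall a : M, exists e, idempotent e /\ Rstar a e)].

(* x^+ : an (in an adequate monoid, the unique) idempotent R*-related to x *)
Definition mplus (x : M) : M :=
  epsilon (inhabits 1) (fun e => idempotent e /\ Rstar x e).

(* x^* : an (in an adequate monoid, the unique) idempotent L*-related to x *)
Definition mstar (x : M) : M :=
  epsilon (inhabits 1) (fun e => idempotent e /\ Lstar x e).

End MonoidDefs.

Record sgraph (Sigma : Type) := SGraph {
  vert : finType;
  edge : finType;
  alpha : edge -> vert;
  omega : edge -> vert;
  lambda : edge -> Sigma;
  startv : vert;
  endv : vert
}.
Arguments SGraph {Sigma vert edge}.

Section Graphs.
Variable Sigma : Type.
Implicit Types X Y : sgraph Sigma.

(* undirected walks: a step is an edge with a direction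
   (true = traversed from alpha to omega, false = backwards) *)
Definition step_src X (s : edge X * bool) : vert X :=
  if s.2 then alpha s.1 else omega s.1.
Definition step_dst X (s : edge X * bool) : vert X :=
  if s.2 then omega s.1 else alpha s.1.

Fixpoint uwalk X (u : vert X) (s : seq (edge X * bool)) (v : vert X) : bool :=
  match s with
  | [::] => u == v
  | st :: s' => (step_src st == u) && uwalk (step_dst st) s' v
  end.

Definition dpath X (u : vert X) (s : seq (edge X)) (v : vert X) : bool :=
  uwalk u [seq (e, true) | e <- s] v.

Definition connected X : Prop :=
  forall u v : vert X, exists s, uwalk u s v.

(* acyclic underlying undirected graph: every closed walk of positive
   length immediately backtracks along some edge *)
Definition no_backtrack X (s : seq (edge X * bool)) : bool :=
  sorted (fun a b => a.1 != b.1) s.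

Definition uacyclic X : Prop :=
  forall (u : vert X) (s : seq (edge X * bool)),
    uwalk u s u -> no_backtrack s -> s = [::].

Definition is_tree X : Prop :=
  [/\ connected X, uacyclic X & exists s, dpath (startv X) s (endv X)].

Definition is_morph X Y (fv : vert X -> vert Y) (fe : edge X -> edge Y) : Prop :=
  [/\ (forall e, alpha (fe e) = fv (alpha e)),
      (forall e, omega (fe e) = fv (omega e)),
      (forall e, lambda (fe e) = lambda e),
      fv (startv X) = startv Y &
      fv (endv X) = endv Y].

Definition is_iso X Y (fv : vert X -> vert Y) (fe : edge X -> edge Y) : Prop :=
  [/\ is_morph fv fe, bijective fv & bijective fe].

Definition isomorphic X Y : Prop := exists fv fe, @is_iso X Y fv fe.

Definition is_retraction X (fv : vert X -> vert X) (fe : edge X -> edge X) : Prop :=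
  [/\ is_morph fv fe, (forall v, fv (fv v) = fv v) & (forall e, fe (fe e) = fe e)].

Definition pruned X : Prop :=
  forall fv fe, @is_retraction X fv fe ->
    (forall v, fv v = v) /\ (forall e, fe e = e).

Lemma retraction_morph X fv fe : @is_retraction X fv fe -> is_morph fv fe.
Proof. by case. Qed.

Section Image.
Variables (X : sgraph Sigma) (fv : vert X -> vert X) (fe : edge X -> edge X).
Hypothesis Hm : is_morph fv fe.

Definition im_vert := {v : vert X | v \in codom fv}.
Definition im_edge := {e : edge X | e \in codom fe}.

Lemma im_alpha_proof (e : im_edge) : alpha (val e) \in codom fv.
Proof.
case: e => e /= /codomP [e' ->]; case: Hm => Ha _ _ _ _.
by rewrite Ha codom_f.
Qed.

Lemma im_omega_proof (e : im_edge) : omega (val e) \in codom fv.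
Proof.
case: e => e /= /codomP [e' ->]; case: Hm => _ Ho _ _ _.
by rewrite Ho codom_f.
Qed.

Lemma im_start_proof : startv X \in codom fv.
Proof. by case: Hm => _ _ _ <- _; rewrite codom_f. Qed.

Lemma im_end_proof : endv X \in codom fv.
Proof. by case: Hm => _ _ _ _ <-; rewrite codom_f. Qed.

Definition image_graph : sgraph Sigma :=
  @SGraph Sigma im_vert im_edge
    (fun e => exist _ (alpha (val e)) (im_alpha_proof e))
    (fun e => exist _ (omega (val e)) (im_omega_proof e))
    (fun e => lambda (val e))
    (exist _ (startv X) im_start_proof)
    (exist _ (endv X) im_end_proof).
End Image.

Definition retract X fv fe (Hr : @is_retraction X fv fe) : sgraph Sigma :=
  image_graph (retraction_morph Hr).

(* -------- connected component of v in X with the edges F removed,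
            as an idempotent graph based at v ---------------------- *)
Section Component.
Variables (X : sgraph Sigma) (F : {set edge X}) (v : vert X).

Definition adj_minus : rel (vert X) :=
  fun u w => [exists e, (e \notin F) &&
     (((alpha e == u) && (omega e == w)) || ((omega e == u) && (alpha e == w)))].

Definition in_comp (u : vert X) : bool := connect adj_minus v u.

Definition comp_vert := {u : vert X | in_comp u}.
Definition comp_edge :=
  {e : edge X | [&& e \notin F, in_comp (alpha e) & in_comp (omega e)]}.

Lemma comp_alpha_proof (e : comp_edge) : in_comp (alpha (val e)).
Proof. by case: e => e /= /and3P []. Qed.
Lemma comp_omega_proof (e : comp_edge) : in_comp (omega (val e)).
Proof. by case: e => e /= /and3P []. Qed.
Lemma comp_base_proof : in_comp v.
Proof. exact: connect0. Qed.

Definition component : sgraph Sigma :=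
  @SGraph Sigma comp_vert comp_edge
    (fun e => exist _ (alpha (val e)) (comp_alpha_proof e))
    (fun e => exist _ (omega (val e)) (comp_omega_proof e))
    (fun e => lambda (val e))
    (exist _ v comp_base_proof)
    (exist _ v comp_base_proof).
End Component.

Variables (M : monoid) (chi : Sigma -> M).
Local Notation "x * y" := (mmul x y).

(* tau with fuel; on an idempotent graph with at most n edges the fuel
   suffices, since each X_e has strictly fewer edges than X *)
Fixpoint tau_fuel (n : nat) (X : sgraph Sigma) : M :=
  match n with
  | 0 => mone M
  | n'.+1 =>
    let v := startv X in
    \big[@mmul M/mone M]_(e : edge X | alpha e == v)
       mplus (chi (lambda e) * tau_fuel n' (component [set e] (omega e)))
    * \big[@mmul M/mone M]_(e : edge X | omega e == v)
       mstar (tau_fuel n' (component [set e] (alpha e)) * chi (lambda e))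
  end.

Definition tau (X : sgraph Sigma) : M := tau_fuel #|edge X| X.

(* the trunk: the (in a tree, unique) directed path from start to end *)
Definition trunk (X : sgraph Sigma) : seq (edge X) :=
  epsilon (inhabits [::]) (fun s => dpath (startv X) s (endv X)).

Definition rho (X : sgraph Sigma) : M :=
  let T := [set e in trunk X] in
  tau (component T (startv X)) *
  \big[@mmul M/mone M]_(e <- trunk X)
     (chi (lambda e) * tau (component T (omega e))).

End Graphs.

(* Main.v *)
From HB Require Import structures.
Set Warnings "-notation-overridden -deprecated -redundant-canonical-projection -notation-incompatible-prefix".
Require Import Defs.
From mathcomp Require Import all_boot.
Require Import Defs.
From Stdlib Require Import ClassicalEpsilon ProofIrrelevance.
Set Implicit Arguments.
Unset Strict Implicit.
Unset Printing Implicit Defensive.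

Definition comm_idem (M : monoid) : Prop :=
  forall e f : M, idempotent e -> idempotent f -> mmul e f = mmul f e.

Record idm (M : monoid) := Idm { ival :> M; iP : idempotent ival }.

Lemma ival_inj M : injective (@ival M).
Proof. move=> [a Ha] [b Hb] /= E; subst; by rewrite (proof_irrelevance _ Ha Hb). Qed.

Lemma idem_mul (M : monoid) (H : comm_idem M) (e f : M) :
  idempotent e -> idempotent f -> idempotent (mmul e f).
Proof.
move=> He Hf; rewrite /idempotent.
rewrite -mmulA [mmul f (mmul e f)]mmulA (H f e) // -mmulA Hf mmulA He //.
Qed.

Definition emul M (H : comm_idem M) (a b : idm M) : idm M :=
  Idm (idem_mul H (iP a) (iP b)).
Lemma idem1 (M : monoid) : idempotent (mone M).
Proof. by rewrite /idempotent mmul1l. Qed.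
Definition eone M : idm M := Idm (idem1 M).

Lemma emulA M (H : comm_idem M) : associative (emul H).
Proof. move=> a b c; apply: ival_inj; by rewrite /= mmulA. Qed.
Lemma emulC M (H : comm_idem M) : commutative (emul H).
Proof. move=> a b; apply: ival_inj; by rewrite /= H //; apply: iP. Qed.
Lemma emul1 M (H : comm_idem M) : left_id (eone M) (emul H).
Proof. move=> a; apply: ival_inj; by rewrite /= mmul1l. Qed.

HB.instance Definition _ M (H : comm_idem M) :=
  Monoid.isComLaw.Build (idm M) (eone M) (emul H) (@emulA M H) (@emulC M H) (@emul1 M H).


Section Alg.
Variable M : monoid.
Hypothesis HM : adequate M.
Local Notation "x ⋅ y" := (mmul x y) (at level 40, left associativity).
Local Notation "1" := (mone M).
Local Notation pl := (@mplus M).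
Local Notation st := (@mstar M).

Lemma HC : comm_idem M. Proof. by case: HM. Qed.

Lemma plus_spec (x : M) : idempotent (pl x) /\ Rstar x (pl x).
Proof.
apply: (epsilon_spec (inhabits 1) (fun e => idempotent e /\ Rstar x e)).
by case: HM => _ _ /(_ x).
Qed.
Lemma star_spec (x : M) : idempotent (st x) /\ Lstar x (st x).
Proof.
apply: (epsilon_spec (inhabits 1) (fun e => idempotent e /\ Lstar x e)).
by case: HM => _ /(_ x).
Qed.
Lemma plus_idem (x : M) : idempotent (pl x). Proof. by case: (plus_spec x). Qed.
Lemma star_idem (x : M) : idempotent (st x). Proof. by case: (star_spec x). Qed.

Lemma plusK (x : M) : (pl x) ⋅ x = x.
Proof.
case: (plus_spec x) => Hi HR.
have := (proj2 (HR (pl x) 1)); rewrite !mmul1l; apply; by rewrite Hi.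
Qed.
Lemma starK (x : M) : x ⋅ (st x) = x.
Proof.
case: (star_spec x) => Hi HL.
have := (proj2 (HL (st x) 1)); rewrite !mmul1r; apply; by rewrite Hi.
Qed.

Lemma Rstar_idem (e f : M) : idempotent e -> idempotent f -> Rstar e f -> e = f.
Proof.
move=> He Hf HR.
have h1 : f ⋅ e = e.
  have := proj2 (HR f 1); rewrite !mmul1l; apply; by rewrite Hf.
have h2 : e ⋅ f = f.
  have := proj1 (HR e 1); rewrite !mmul1l; apply; by rewrite He.
by rewrite -h1 HC.
Qed.
Lemma Lstar_idem (e f : M) : idempotent e -> idempotent f -> Lstar e f -> e = f.
Proof.
move=> He Hf HL.
have h1 : e ⋅ f = e.
  have := proj2 (HL f 1); rewrite !mmul1r; apply; by rewrite Hf.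
have h2 : f ⋅ e = f.
  have := proj1 (HL e 1); rewrite !mmul1r; apply; by rewrite He.
by rewrite -h1 HC.
Qed.

Lemma plus_uniq (x e : M) : idempotent e -> Rstar x e -> (pl x) = e.
Proof.
move=> He HR; case: (plus_spec x) => Hi HR'.
apply: Rstar_idem => // u w; rewrite -HR'; exact: HR.
Qed.
Lemma star_uniq (x e : M) : idempotent e -> Lstar x e -> (st x) = e.
Proof.
move=> He HL; case: (star_spec x) => Hi HL'.
apply: Lstar_idem => // u w; rewrite -HL'; exact: HL.
Qed.

Lemma plus_id (e : M) : idempotent e -> (pl e) = e.
Proof. move=> He; apply: plus_uniq => //. Qed.
Lemma star_id (e : M) : idempotent e -> (st e) = e.
Proof. move=> He; apply: star_uniq => //. Qed.

Lemma plus_mulr (x y : M) : pl (x ⋅ y) = pl (x ⋅ (pl y)).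
Proof.
apply: plus_uniq; first exact: plus_idem.
move=> u w; case: (plus_spec (x ⋅ (pl y))) => _ HR; rewrite -HR.
case: (plus_spec y) => _ Hy.
rewrite !mmulA; exact: Hy.
Qed.
Lemma star_mull (x y : M) : (st (x ⋅ y)) = (st ((st x) ⋅ y)).
Proof.
apply: star_uniq; first exact: star_idem.
move=> u w; case: (star_spec ((st x) ⋅ y)) => _ HL; rewrite -HL.
case: (star_spec x) => _ Hx.
rewrite -!mmulA; exact: Hx.
Qed.

Lemma plus_idl (e x : M) : idempotent e -> (pl (e ⋅ x)) = e ⋅ (pl x).
Proof.
move=> He; rewrite plus_mulr plus_id //; exact: (idem_mul HC He (plus_idem x)).
Qed.
Lemma star_idr (e x : M) : idempotent e -> (st (x ⋅ e)) = (st x) ⋅ e.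
Proof.
move=> He; rewrite star_mull star_id //; exact: (idem_mul HC (star_idem x) He).
Qed.


Lemma plus_le (x y : M) : (pl x) ⋅ pl (x ⋅ y) = pl (x ⋅ y).
Proof.
case: (plus_spec (x ⋅ y)) => _ HR.
have := proj1 (HR (pl x) 1); rewrite !mmul1l; apply; by rewrite mmulA plusK.
Qed.
Lemma star_le (x y : M) : (st (x ⋅ y)) ⋅ (st y) = (st (x ⋅ y)).
Proof.
case: (star_spec (x ⋅ y)) => _ HL.
have := proj1 (HL (st y) 1); rewrite !mmul1r; apply; by rewrite -mmulA starK.
Qed.


Lemma pl_idem' (x : M) : idempotent (pl x). Proof. exact: plus_idem. Qed.

Lemma alg_out (A B C x : M) : idempotent A -> idempotent B -> idempotent C ->
  (st (A ⋅ x)) ⋅ B ⋅ C = (st (A ⋅ x)) ⋅ B ->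
  A ⋅ pl (x ⋅ B) ⋅ pl (x ⋅ C) = A ⋅ pl (x ⋅ B).
Proof.
move=> IA IB IC H.
set D := (st (A ⋅ x)) ⋅ B.
have ID : idempotent D := idem_mul HC (star_idem _) IB.
have S1 : A ⋅ pl (x ⋅ B) = A ⋅ pl (x ⋅ D).
  rewrite -!plus_idl //; congr (pl _).
  by rewrite /D !mmulA starK.
have DC : D = C ⋅ D by rewrite -HC // -H.
have S2 : pl (x ⋅ D) ⋅ pl (x ⋅ C) = pl (x ⋅ D).
  rewrite HC; try exact: plus_idem.
  by rewrite DC mmulA plus_le.
by rewrite S1 -mmulA S2.
Qed.

Lemma alg_in (A B C x : M) : idempotent A -> idempotent B -> idempotent C ->
  A ⋅ pl (x ⋅ B) ⋅ C = A ⋅ pl (x ⋅ B) ->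
  (st (A ⋅ x)) ⋅ B ⋅ st (C ⋅ x) = (st (A ⋅ x)) ⋅ B.
Proof.
move=> IA IB IC H.
set D := A ⋅ pl (x ⋅ B).
have ID : idempotent D := idem_mul HC IA (plus_idem _).
have S1 : (st (A ⋅ x)) ⋅ B = (st (D ⋅ x)) ⋅ B.
  rewrite -!star_idr //; congr (st _).
  by rewrite /D -(mmulA A x B) -{1}(plusK (x ⋅ B)) !mmulA.
have S2 : st (D ⋅ x) ⋅ st (C ⋅ x) = st (D ⋅ x).
  have -> : D ⋅ x = D ⋅ (C ⋅ x) by rewrite mmulA H.
  exact: star_le.
rewrite S1 -mmulA [B ⋅ _]HC; [|exact: IB|exact: star_idem].
by rewrite mmulA S2.
Qed.

Fixpoint allI (l : seq (M * M)) : Prop :=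
  match l with [::] => True | p :: l' => idempotent p.2 /\ allI l' end.

Fixpoint Rgt (a : M) (l : seq (M * M)) : M :=
  match l with
  | [::] => a
  | (c, b) :: l' => a ⋅ pl (c ⋅ Rgt b l')
  end.

Fixpoint TP (L a : M) (l : seq (M * M)) : M :=
  match l with
  | [::] => L ⋅ a
  | (c, b) :: l' => L ⋅ a ⋅ pl (c ⋅ Rgt b l') ⋅ c ⋅ TP (st (L ⋅ a ⋅ c)) b l'
  end.

Definition Wval (a : M) (l : seq (M * M)) : M :=
  a ⋅ \big[@mmul M/mone M]_(p <- l) (p.1 ⋅ p.2).

Lemma Rgt_W a l : idempotent a -> allI l -> Rgt a l = pl (Wval a l).
Proof.
elim: l a => [|[c b] l IH] a Ia /=.
  by move=> _; rewrite /Wval big_nil mmul1r plus_id.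
move=> [Ib Il]; rewrite IH // /Wval big_cons /= -plus_mulr -plus_idl //.
by rewrite !mmulA.
Qed.

Lemma comm3 (e f g x : M) : idempotent e -> idempotent f -> idempotent g ->
  e ⋅ (f ⋅ (g ⋅ x)) = f ⋅ (g ⋅ (e ⋅ x)).
Proof.
move=> Ie If Ig.
by rewrite (mmulA e f) (HC Ie If) -(mmulA f e) (mmulA e g) (HC Ie Ig) -(mmulA g e).
Qed.

Lemma TP_W (P L a : M) l : idempotent L -> idempotent a -> allI l ->
  P ⋅ L = P -> P ⋅ TP L a l = P ⋅ Wval a l.
Proof.
elim: l P L a => [|[c b] l IH] P L a IL Ia /=.
  by move=> _ HP; rewrite /Wval big_nil mmul1r mmulA HP.
move=> [Ib Il] HP.
set R := Rgt b l.
have Q1 : P ⋅ (L ⋅ a ⋅ pl (c ⋅ R) ⋅ c ⋅ TP (st (L ⋅ a ⋅ c)) b l) =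
          (P ⋅ pl (c ⋅ R) ⋅ (L ⋅ a ⋅ c)) ⋅ TP (st (L ⋅ a ⋅ c)) b l.
  rewrite -!mmulA; congr (P ⋅ _); rewrite [RHS]comm3 //; exact: plus_idem.
rewrite Q1 IH //; last 2 first.
- exact: star_idem.
- by rewrite -mmulA starK.
rewrite /R Rgt_W // -plus_mulr /Wval big_cons /=.
set W := \big[@mmul M/mone M]_(p <- l) (p.1 ⋅ p.2).
have -> : P ⋅ pl (c ⋅ (b ⋅ W)) ⋅ (L ⋅ a ⋅ c) ⋅ (b ⋅ W) =
   P ⋅ (L ⋅ a) ⋅ (pl (c ⋅ (b ⋅ W)) ⋅ (c ⋅ (b ⋅ W))).
  rewrite -!mmulA; congr (P ⋅ _); rewrite comm3 //; exact: plus_idem.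
by rewrite plusK (mmulA P L a) HP -!mmulA.
Qed.
End Alg.

Section Tau.
Variable Sigma : Type.
Variable M : monoid.
Hypothesis HM : adequate M.
Variable chi : Sigma -> M.
Local Notation "x ⋅ y" := (mmul x y) (at level 40, left associativity).
Local Notation pl := (@mplus M).
Local Notation st := (@mstar M).
Local Notation EM := (emul (HC HM)).
Local Notation E1 := (eone M).

Definition eplus (x : M) : idm M := Idm (plus_idem HM x).
Definition estar (x : M) : idm M := Idm (star_idem HM x).

Fixpoint tauA (X : sgraph Sigma) (n : nat) (F : {set edge X}) (v : vert X) : idm M :=
  match n with
  | 0 => E1
  | n'.+1 =>
    EM (\big[EM/E1]_(e | (e \notin F) && (alpha e == v))
          eplus (chi (lambda e) ⋅ ival (tauA n' (e |: F) (omega e))))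
       (\big[EM/E1]_(e | (e \notin F) && (omega e == v))
          estar (ival (tauA n' (e |: F) (alpha e)) ⋅ chi (lambda e)))
  end.

Lemma ival_big (I : finType) (P : pred I) (f : I -> idm M) :
  \big[@mmul M/mone M]_(i | P i) ival (f i) = ival (\big[EM/E1]_(i | P i) f i).
Proof.
by rewrite (big_morph (@ival M) (op2 := EM) (op1 := @mmul M) (id2 := E1) (id1 := mone M)).
Qed.

Section Embed.
Variables (H G : sgraph Sigma) (iv : vert H -> vert G) (ie : edge H -> edge G)
  (F : {set edge G}).
Hypotheses (iv_inj : injective iv) (ie_inj : injective ie)
  (ia : forall e, alpha (ie e) = iv (alpha e))
  (io : forall e, omega (ie e) = iv (omega e))
  (il : forall e, lambda (ie e) = lambda e)
  (ieF : forall e, ie e \notin F)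
  (cov : forall h e, e \notin F -> (alpha e = iv h \/ omega e = iv h) ->
           exists e', ie e' = e).

Lemma reindex_embed (F' : {set edge H}) (h : vert H) (end_ : edge G -> vert G)
   (end' : edge H -> vert H) (hend : forall e, end_ (ie e) = iv (end' e))
   (hcov : forall e, end_ e = iv h -> alpha e = iv h \/ omega e = iv h)
   (g : edge G -> idm M) :
  \big[EM/E1]_(e | (e \notin F') && (end' e == h)) g (ie e) =
  \big[EM/E1]_(e | (e \notin F :|: ie @: F') && (end_ e == iv h)) g e.
Proof.
transitivity (\big[EM/E1]_(e in [set e | (e \notin F') && (end' e == h)]) g (ie e)).
  by apply: eq_bigl => e; rewrite inE.
rewrite -(big_imset (aop := EM) (h := ie) g); last by move=> x y _ _; apply: ie_inj.
rewrite big_mkcond [RHS]big_mkcond /=; apply: eq_bigr => i _.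
rewrite [in RHS]inE negb_or.
case: (boolP (i \in _)) => [/imsetP [e]|Hni].
  rewrite inE => /andP [HF' /eqP He] ->.
  rewrite ieF /= hend He eqxx andbT.
  by rewrite (mem_imset _ _ ie_inj) HF'.
case: (boolP (i \notin F)) => //= HiF.
case: (boolP (end_ i == iv h)) => /eqP Hend; last by rewrite andbF.
have [e' He'] := @cov h i HiF (hcov _ Hend); subst i.
rewrite (mem_imset _ _ ie_inj) /=.
case: (boolP (e' \in F')) => //= He'F.
exfalso; move/negP: Hni; apply; apply/imsetP; exists e' => //.
by rewrite inE He'F /= -(inj_eq iv_inj) -hend Hend.
Qed.

Lemma tauA_embed n F' h :
  tauA n F' h = tauA n (F :|: ie @: F') (iv h).
Proof.
elim: n F' h => [//|n IH] F' h /=.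
congr EM.
- pose g := fun e => eplus (chi (lambda e) ⋅ ival (tauA n (e |: (F :|: ie @: F')) (omega e))).
  transitivity (\big[EM/E1]_(e | (e \notin F') && (alpha e == h)) g (ie e)).
    apply: eq_bigr => e _; by rewrite /g IH il io imsetU1 setUCA.
  apply: reindex_embed => //; by move=> e ->; left.
- pose g := fun e => estar (ival (tauA n (e |: (F :|: ie @: F')) (alpha e)) ⋅ chi (lambda e)).
  transitivity (\big[EM/E1]_(e | (e \notin F') && (omega e == h)) g (ie e)).
    apply: eq_bigr => e _; by rewrite /g IH il ia imsetU1 setUCA.
  apply: reindex_embed => //; by move=> e ->; right.
Qed.
End Embed.

Lemma cardC_U1 (T : finType) (e : T) (F : {set T}) :
  e \notin F -> #|~: (e |: F)|.+1 = #|~: F|.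
Proof.
move=> HeF; rewrite [RHS](cardsD1 e) inE HeF /= add1n; congr _.+1.
by apply: eq_card => x; rewrite !inE negb_or andbC.
Qed.

Lemma tauA_full (X : sgraph Sigma) n (F : {set edge X}) (v : vert X) : #|~: F| = 0 -> tauA n F v = E1.
Proof.
move=> H0; case: n => //= n.
have HF : forall e : edge X, (e \notin F) = false.
  move=> e; apply/negbTE; rewrite -in_setC; apply/negP => He.
  by move: H0; rewrite (cardsD1 e) He.
rewrite !big_pred0 => [|e|e]; try by rewrite HF.
by apply: ival_inj; rewrite /= mmul1l.
Qed.

Lemma tauA_stable (X : sgraph Sigma) n m (F : {set edge X}) (v : vert X) :
  #|~: F| <= n -> #|~: F| <= m -> tauA n F v = tauA m F v.
Proof.
elim: n m F v => [|n IH] m F v Hn Hm.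
  have H0 : #|~: F| = 0 by apply/eqP; rewrite -leqn0.
  by rewrite [RHS]tauA_full.
case: m Hm => [|m] Hm.
  have H0 : #|~: F| = 0 by apply/eqP; rewrite -leqn0.
  by rewrite tauA_full.
rewrite /=; congr EM; apply: eq_bigr => e /andP [HeF _]; rewrite (IH m) //;
  rewrite -ltnS cardC_U1 //.
Qed.

Lemma comp_embed (G : sgraph Sigma) (F : {set edge G}) (v : vert G) n F' h :
  tauA (X := component F v) n F' h = tauA n (F :|: val @: F') (val h).
Proof.
apply: tauA_embed => //.
- exact: val_inj.
- exact: val_inj.
- by move=> e; case: e => e /= /and3P [].
- move=> h' e HeF Hinc.
  have Hh := valP h'.
  have Ha : in_comp F v (alpha e) /\ in_comp F v (omega e).
    rewrite /in_comp.
    case: Hinc => Heq; rewrite Heq; (split; [by []| ]) || split => //.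
    + apply: connect_trans Hh _; apply: connect1; apply/existsP; exists e.
      by rewrite HeF Heq !eqxx.
    + apply: connect_trans Hh _; apply: connect1; apply/existsP; exists e.
      by rewrite HeF Heq !eqxx orbT.
  have He : [&& e \notin F, in_comp F v (alpha e) & in_comp F v (omega e)].
    by case: Ha => -> ->; rewrite HeF.
  by exists (exist _ e He).
Qed.

Lemma tau_fuelE (G : sgraph Sigma) n :
  tau_fuel chi n G = ival (tauA n set0 (startv G)).
Proof.
elim: n G => [//|n IH] G /=.
rewrite -!ival_big; congr mmul.
- apply: eq_big => e; first by rewrite inE.
  move=> _; rewrite /= IH comp_embed /= imset0 setU0; congr (pl (_ ⋅ ival _)).
- apply: eq_big => e; first by rewrite inE.
  move=> _; rewrite /= IH comp_embed /= imset0 setU0; congr (st (ival _ ⋅ _)).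
Qed.
End Tau.

Section TreeGraph.
Variable Sigma : Type.
Variable X : sgraph Sigma.
Hypothesis Hac : uacyclic X.

Implicit Types (F : {set edge X}) (u v w x y z : vert X) (e f : edge X).

Lemma adj_sym F : symmetric (adj_minus F).
Proof.
move=> u w; apply/existsP/existsP => -[e /andP [HF H]]; exists e; rewrite HF /=;
  by case/orP: H => /andP [-> ->]; rewrite ?orbT.
Qed.

Lemma conn_sym F u w : connect (adj_minus F) u w = connect (adj_minus F) w u.
Proof. by rewrite (sym_connect_sym (adj_sym F)). Qed.

Lemma adj_edge F e : e \notin F -> adj_minus F (alpha e) (omega e).
Proof. move=> HF; apply/existsP; exists e; by rewrite HF !eqxx. Qed.

Lemma conn_mono F F' u w : F \subset F' ->
  connect (adj_minus F') u w -> connect (adj_minus F) u w.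
Proof.
move=> HS; apply: connect_sub => a b /existsP [e /andP [HF H]]; apply: connect1.
apply/existsP; exists e; rewrite H andbT.
by apply: contra HF; apply: (subsetP HS).
Qed.

Lemma conn_edge_a F e u : e \notin F ->
  connect (adj_minus F) u (alpha e) = connect (adj_minus F) u (omega e).
Proof.
move=> HF; apply/idP/idP => H.
  by apply: connect_trans H (connect1 (adj_edge HF)).
apply: connect_trans H (connect1 _); by rewrite adj_sym adj_edge.
Qed.

Lemma walk_conn F u s w : uwalk u s w -> all (fun st => st.1 \notin F) s ->
  connect (adj_minus F) u w.
Proof.
elim: s u => [|[e b] s IH] u /=; first by move/eqP ->.
move=> /andP [/eqP Hs Hw] /andP [HF Hall].
apply: connect_trans (IH _ Hw Hall); apply: connect1; rewrite -Hs.
case: b {Hs Hw} => /=; first exact: adj_edge.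
by rewrite adj_sym adj_edge.
Qed.

Lemma path_walk F x p : path (adj_minus F) x p -> uniq (x :: p) ->
  exists s, [&& uwalk x s (last x p), no_backtrack s,
             all (fun st => st.1 \notin F) s & map (@step_dst _ X) s == p].
Proof.
elim: p x => [|y p IH] x /=.
  by move=> _ _; exists [::]; rewrite /= eqxx.
move=> /andP [Hxy Hp] /andP [Hx Hu].
have [s' /and4P [Hw Hnb Hall /eqP Hmap]] := IH y Hp Hu.
move/existsP: Hxy => [e /andP [HF Hdir]].
have [b [Hsrc Hdst]] : exists b, step_src (e, b) = x /\ step_dst (e, b) = y.
  case/orP: Hdir => /andP [/eqP H1 /eqP H2]; [exists true | exists false]; by [].
subst p.
exists ((e, b) :: s'); rewrite /= Hsrc Hdst eqxx Hw HF Hall eqxx /= !andbT.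
rewrite /no_backtrack /=.
clear IH Hp; case: s' Hw Hnb Hall Hx Hu => [//|[e2 b2] s''] /= Hw Hnb Hall Hx Hu; rewrite Hnb andbT.
move: Hw => /andP [/eqP Hsrc2 _].
apply/eqP => Hee; subst e2.
move: Hx; rewrite !inE !negb_or => /and3P [Hxy Hxz _].
move: Hu => /andP [Hyp _]; move: Hyp; rewrite !inE negb_or => /andP [Hyz _].
clear Hnb Hall; case: b b2 Hsrc Hdst Hsrc2 Hxy Hxz Hyz => [] [] Hsrc Hdst Hsrc2 Hxy Hxz Hyz;
  rewrite /= in Hsrc Hdst Hsrc2 Hxz Hyz; subst x y;
  by rewrite ?Hsrc2 ?eqxx in Hxy Hxz Hyz.
Qed.

Lemma conn_walk F u w : connect (adj_minus F) u w ->
  exists s, [&& uwalk u s w, no_backtrack s & all (fun st => st.1 \notin F) s].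
Proof.
move/connectP => [p Hp ->].
case: (shortenP Hp) => p' Hp' Hu _.
have [s /and4P [H1 H2 H3 _]] := path_walk Hp' Hu.
by exists s; rewrite H1 H2 H3.
Qed.

Lemma no_loop e : alpha e != omega e.
Proof.
apply/negP => /eqP H.
have Hw : uwalk (alpha e) [:: (e, true)] (alpha e) by rewrite /= eqxx /= H eqxx.
by have := Hac Hw isT.
Qed.

Lemma no_return e : ~~ connect (adj_minus [set e]) (omega e) (alpha e).
Proof.
apply/negP => /conn_walk [s /and3P [Hw Hnb Hall]].
have Hw' : uwalk (alpha e) ((e, true) :: s) (alpha e) by rewrite /= /step_src /step_dst /= eqxx.
have Hnb' : no_backtrack ((e, true) :: s).
  move: Hnb Hall; rewrite /no_backtrack; clear Hw Hw'; case: s => [//|st s] /= -> /andP [Hst _]; rewrite andbT.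
  by move: Hst; rewrite inE eq_sym.
by have := Hac Hw' Hnb'.
Qed.

Lemma no_return' e : ~~ connect (adj_minus [set e]) (alpha e) (omega e).
Proof. by rewrite conn_sym no_return. Qed.

Lemma uwalk_cat u s1 s2 w :
  uwalk u (s1 ++ s2) w = uwalk u s1 (last u (map (@step_dst _ X) s1)) &&
                         uwalk (last u (map (@step_dst _ X) s1)) s2 w.
Proof.
elim: s1 u => [|st s1 IH] u /=; first by rewrite eqxx.
by rewrite IH andbA.
Qed.

Lemma uwalk_last u s w : uwalk u s w -> w = last u (map (@step_dst _ X) s).
Proof. elim: s u => [|st s IH] u /=; [by move/eqP | by case/andP => _ /IH]. Qed.

Lemma dpath_nb u s w : dpath u s w -> no_backtrack [seq (e, true) | e <- s].
Proof.
rewrite /dpath /no_backtrack.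
elim: s u => [//|e s IH] u /= /andP [_ Hw].
have := IH _ Hw.
case: s {IH} Hw => [//|e2 s] /= Hw ->; rewrite andbT.
move: Hw => /andP [/eqP H _]; apply/eqP => He; subst e2.
rewrite /step_src /step_dst /= in H; by move: (no_loop e); rewrite H eqxx.
Qed.

Lemma dcycle u s : dpath u s u -> s = [::].
Proof.
move=> H; have := Hac H (dpath_nb H).
by case: s {H}.
Qed.

Lemma dpath_cons u e s w : dpath u (e :: s) w = (alpha e == u) && dpath (omega e) s w.
Proof. by []. Qed.

Lemma dpath_cat u p q w :
  dpath u (p ++ q) w = dpath u p (last u (map (@omega _ X) p)) && dpath (last u (map (@omega _ X) p)) q w.
Proof.
rewrite /dpath map_cat uwalk_cat -map_comp.
by have -> : (@step_dst _ X) \o (fun e => (e, true)) = (@omega _ X) by [].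
Qed.

Lemma dpath_last u s w : dpath u s w -> w = last u (map (@omega _ X) s).
Proof.
move/uwalk_last ->; by rewrite -map_comp.
Qed.

Lemma dpath_split u p e q w : dpath u (p ++ e :: q) w ->
  dpath u p (alpha e) /\ dpath (omega e) q w.
Proof.
rewrite dpath_cat dpath_cons => /and3P [H1 /eqP H2 H3].
by rewrite H2; split.
Qed.

Lemma dpath_notin f e s w : dpath (omega f) s w -> alpha e = alpha f -> e \notin s.
Proof.
move=> Hd Ha; apply/negP => Hin.
case/splitPr: Hin Hd => a b /dpath_split [Ha' _].
have : dpath (alpha f) (f :: a) (alpha f) by rewrite dpath_cons eqxx -Ha.
by move/dcycle.
Qed.

Lemma dpath_notin2 u e s : dpath u s (alpha e) -> e \notin s.
Proof.
move=> Hd; apply/negP => Hin.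
case/splitPr: Hin Hd => a b /dpath_split [_ Hb].
have : dpath (alpha e) (e :: b) (alpha e) by rewrite dpath_cons eqxx.
by move/dcycle.
Qed.

Lemma dpath_conn F z q w : dpath z q w -> all (fun e => e \notin F) q ->
  connect (adj_minus F) z w.
Proof.
move=> Hd Hall; apply: walk_conn Hd _.
by rewrite all_map.
Qed.

Lemma dpath_uniq u s1 s2 w : dpath u s1 w -> dpath u s2 w -> s1 = s2.
Proof.
elim: s1 u s2 => [|e s1 IH] u s2.
  by move=> /eqP <- /dcycle.
case: s2 => [|f s2].
  by move=> H /eqP Hw; subst w; move/dcycle: H.
rewrite !dpath_cons => /andP [/eqP Hae H1] /andP [/eqP Haf H2].
case: (eqVneq e f) => [Hef|Hne]; first by subst f; rewrite (IH _ _ H1 H2).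
exfalso.
have He1 : e \notin s1 by apply: dpath_notin H1 _.
have He2 : e \notin s2 by apply: dpath_notin H2 _; rewrite Hae Haf.
have C1 : connect (adj_minus [set e]) (omega e) w.
  apply: dpath_conn H1 _; apply/allP => x Hx; rewrite inE.
  by apply/eqP => Hxe; subst x; rewrite Hx in He1.
have C2 : connect (adj_minus [set e]) (omega f) w.
  apply: dpath_conn H2 _; apply/allP => x Hx; rewrite inE.
  by apply/eqP => Hxe; subst x; rewrite Hx in He2.
have C3 : connect (adj_minus [set e]) (omega f) (alpha f).
  by apply: connect1; rewrite adj_sym adj_edge // inE eq_sym.
have : connect (adj_minus [set e]) (omega e) (alpha e).
  rewrite Hae -Haf; apply: connect_trans C1 _; rewrite conn_sym in C2.
  by apply: connect_trans C2 C3.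
by apply/negP; apply: no_return.
Qed.

Lemma alpha_in z q w e : dpath z q w -> e \in q -> alpha e \in z :: map (@omega _ X) q.
Proof.
elim: q z => [//|e' q IH] z; rewrite dpath_cons => /andP [/eqP Ha Hd] /=.
rewrite inE => /orP [/eqP ->|Hin]; first by rewrite Ha mem_head.
by rewrite inE (IH _ Hd Hin) orbT.
Qed.

Lemma reach_fwd F z q w y : dpath z q w -> all (fun e => e \notin F) q ->
  y \in z :: map (@omega _ X) q -> connect (adj_minus F) z y.
Proof.
elim: q z => [|e q IH] z /=.
  by move=> _ _; rewrite inE => /eqP ->.
rewrite dpath_cons => /andP [/eqP Ha Hd] /andP [HF Hall].
rewrite inE => /orP [/eqP ->|Hin]; first exact: connect0.
apply: connect_trans (IH _ Hd Hall Hin); apply: connect1; rewrite -Ha.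
exact: adj_edge.
Qed.

Lemma reach_bwd F z p m x : dpath z p m -> all (fun e => e \notin F) p ->
  x \in z :: map (@omega _ X) p -> connect (adj_minus F) x m.
Proof.
move=> Hd Hall Hx.
have Hzx := reach_fwd Hd Hall Hx.
have Hzm : connect (adj_minus F) z m.
  rewrite (dpath_last Hd); apply: reach_fwd Hd Hall _; exact: mem_last.
rewrite conn_sym in Hzx; exact: connect_trans Hzx Hzm.
Qed.

Lemma sep u p e q w x y : dpath u (p ++ e :: q) w ->
  x \in u :: map (@omega _ X) p -> y \in omega e :: map (@omega _ X) q ->
  ~~ connect (adj_minus [set e]) x y.
Proof.
move=> Hd Hx Hy; have [Hp Hq] := dpath_split Hd.
have Hep : e \notin p := dpath_notin2 Hp.
have Heq : e \notin q by apply: dpath_notin Hq _.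
have Allp : all (fun e' => e' \notin [set e]) p.
  apply/allP => a Ha; rewrite inE; apply/eqP => Hae; subst a; by rewrite Ha in Hep.
have Allq : all (fun e' => e' \notin [set e]) q.
  apply/allP => a Ha; rewrite inE; apply/eqP => Hae; subst a; by rewrite Ha in Heq.
apply/negP => Hxy.
have C1 := reach_bwd Hp Allp Hx.
have C2 := reach_fwd Hq Allq Hy.
have : connect (adj_minus [set e]) (alpha e) (omega e).
  rewrite conn_sym in C1; rewrite conn_sym in C2.
  by apply: connect_trans (connect_trans C1 Hxy) C2.
by apply/negP; apply: no_return'.
Qed.

End TreeGraph.

Section Irr.
Variable Sigma : Type.
Variable M : monoid.
Hypothesis HM : adequate M.
Variable chi : Sigma -> M.
Variable X : sgraph Sigma.
Hypothesis Hac : uacyclic X.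
Local Notation "x ⋅ y" := (mmul x y) (at level 40, left associativity).
Local Notation EM := (emul (HC HM)).
Local Notation E1 := (eone M).
Local Notation T := (tauA HM chi (X := X)).
Local Notation N := #|edge X|.
Definition tauS (F : {set edge X}) (v : vert X) := T N F v.

Implicit Types (F : {set edge X}) (u v w x y z : vert X) (e f : edge X).

Lemma EMA : associative EM. Proof. exact: emulA. Qed.
Lemma EMC : commutative EM. Proof. exact: emulC. Qed.
Lemma EM1 : left_id E1 EM. Proof. exact: emul1. Qed.
Lemma EMr1 : right_id E1 EM. Proof. by move=> a; rewrite EMC EM1. Qed.

Lemma setU1_in e F : e \in F -> e |: F = F.
Proof. move=> H; apply/setP => x; rewrite !inE; case: eqVneq => // ->; by rewrite H. Qed.

Lemma irr1 n F v e : (e \notin F -> ~~ connect (adj_minus F) v (alpha e)) ->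
  T n (e |: F) v = T n F v.
Proof.
case: (boolP (e \in F)) => HeF H; first by rewrite setU1_in.
move: H => /(_ isT) H.
elim: n F v HeF H => [//|n IH] F v HeF H /=.
congr EM.
- apply: eq_big => e'.
    rewrite !inE negb_or; case: (eqVneq e' e) => [->|//] /=.
    rewrite HeF /=; apply/esym/negbTE; apply: contra H => /eqP <-; exact: connect0.
  rewrite !inE negb_or => /andP [/andP [Hne HF'] /eqP Ha].
  rewrite setUCA IH //.
    by rewrite !inE negb_or eq_sym Hne.
  apply: contra H => Hc.
  have Hc' := conn_mono (subsetUr [set e'] F) Hc.
  apply: connect_trans Hc'; rewrite -Ha; apply: connect1; exact: adj_edge.
- apply: eq_big => e'.
    rewrite !inE negb_or; case: (eqVneq e' e) => [->|//] /=.
    rewrite HeF /=; apply/esym/negbTE; apply: contra H => /eqP <-.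
    by apply: connect1; rewrite adj_sym adj_edge.
  rewrite !inE negb_or => /andP [/andP [Hne HF'] /eqP Ha].
  rewrite setUCA IH //.
    by rewrite !inE negb_or eq_sym Hne.
  apply: contra H => Hc.
  have Hc' := conn_mono (subsetUr [set e'] F) Hc.
  apply: connect_trans Hc'; rewrite -Ha; apply: connect1; by rewrite adj_sym adj_edge.
Qed.

Lemma irr_seq n F v (l : seq (edge X)) :
  (forall e, e \in l -> e \notin F -> ~~ connect (adj_minus F) v (alpha e)) ->
  T n (F :|: [set x in l]) v = T n F v.
Proof.
elim: l F => [|a l IH] F H.
  have -> : F :|: [set x in [::]] = F by apply/setP => x; rewrite !inE orbF.
  by [].
have -> : F :|: [set x in a :: l] = (a |: F) :|: [set x in l].
  by apply/setP => x; rewrite !inE orbCA orbA.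
rewrite IH; last first.
  move=> e Hel; rewrite inE negb_or => /andP [_ HeF].
  apply: contra (H e _ HeF); last by rewrite inE Hel orbT.
  apply: conn_mono; exact: subsetUr.
apply: irr1 => HaF; apply: H HaF; exact: mem_head.
Qed.

Lemma tauS_unfold F v :
  tauS F v =
  EM (\big[EM/E1]_(e | (e \notin F) && (alpha e == v))
          eplus HM (chi (lambda e) ⋅ ival (tauS (e |: F) (omega e))))
     (\big[EM/E1]_(e | (e \notin F) && (omega e == v))
          estar HM (ival (tauS (e |: F) (alpha e)) ⋅ chi (lambda e))).
Proof.
rewrite /tauS.
case HN: #|edge X| => [|N'].
  have H0 : forall e : edge X, false.
    by move=> e; move: HN; rewrite (cardD1 e).
  by rewrite !big_pred0 ?EM1 // => e; have := H0 e.
have Hc : forall e, e \notin F -> #|~: (e |: F)| <= N'.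
  move=> e HeF; rewrite -ltnS cardC_U1 // -HN; exact: max_card.
rewrite /=; congr EM; apply: eq_bigr => e /andP [HeF _]; rewrite (@tauA_stable _ _ _ _ _ N' N'.+1) //;
  by [apply: Hc | apply: leqW; apply: Hc].
Qed.

Lemma cut_out F e : e \notin F ->
  tauS F (alpha e) =
  EM (tauS (e |: F) (alpha e)) (eplus HM (chi (lambda e) ⋅ ival (tauS (e |: F) (omega e)))).
Proof.
move=> HeF.
rewrite tauS_unfold [tauS (e |: F) (alpha e)]tauS_unfold.
rewrite (bigD1 e) /=; last by rewrite HeF eqxx.
rewrite -EMA EMC; congr EM; congr EM.
- apply: eq_big => i.
    by rewrite !inE negb_or [_ && (i != e)]andbC andbA.
  move=> /andP [/andP [HiF /eqP Ha] Hne]; rewrite /tauS setUCA (@irr1 _ (i |: F) _ e) //.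
  move=> _; apply: contra (no_return Hac i) => Hc.
  by rewrite Ha; apply: conn_mono Hc; exact: subsetUl.
- apply: eq_big => i.
    rewrite !inE negb_or; case: (eqVneq i e) => [->|] //=.
    by rewrite HeF /=; apply/negbTE; rewrite eq_sym; exact: (no_loop Hac _).
  move=> /andP [HiF /eqP Ho]; rewrite /tauS setUCA (@irr1 _ (i |: F) _ e) //.
  move=> _; apply: contra (no_return' Hac i) => Hc.
  by rewrite Ho; apply: conn_mono Hc; exact: subsetUl.
Qed.

Lemma cut_in F e : e \notin F ->
  tauS F (omega e) =
  EM (estar HM (ival (tauS (e |: F) (alpha e)) ⋅ chi (lambda e))) (tauS (e |: F) (omega e)).
Proof.
move=> HeF.
rewrite tauS_unfold [tauS (e |: F) (omega e)]tauS_unfold.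
rewrite [X in EM _ X](bigD1 e) /=; last by rewrite HeF eqxx.
rewrite EMC -EMA; congr EM; rewrite EMC; congr EM.
- apply: eq_big => i.
    rewrite !inE negb_or; case: (eqVneq i e) => [->|] //=.
    by rewrite HeF /=; apply/negbTE; exact: (no_loop Hac _).
  move=> /andP [HiF /eqP Ha]; rewrite /tauS setUCA (@irr1 _ (i |: F) _ e) //.
  have Hne : i != e by apply/eqP => Hie; subst i; move: (no_loop Hac e); rewrite Ha eqxx.
  have HeiF : e \notin i |: F by rewrite !inE negb_or eq_sym Hne.
  move=> _; apply: contra (no_return Hac i) => Hc.
  have Hc2 : connect (adj_minus (i |: F)) (omega i) (omega e) by rewrite -conn_edge_a.
  rewrite Ha; apply: conn_mono Hc2; exact: subsetUl.
- apply: eq_big => i.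
    by rewrite !inE negb_or [_ && (i != e)]andbC andbA.
  move=> /andP [/andP [HiF /eqP Ho] Hne]; rewrite /tauS setUCA (@irr1 _ (i |: F) _ e) //.
  have HeiF : e \notin i |: F by rewrite !inE negb_or eq_sym Hne.
  move=> _; apply: contra (no_return' Hac i) => Hc.
  have Hc2 : connect (adj_minus (i |: F)) (alpha i) (omega e) by rewrite -conn_edge_a.
  rewrite Ho; apply: conn_mono Hc2; exact: subsetUl.
Qed.

End Irr.

Section LemT.
Variable Sigma : Type.
Variable M : monoid.
Hypothesis HM : adequate M.
Variable chi : Sigma -> M.
Variable X : sgraph Sigma.
Hypothesis Hac : uacyclic X.
Local Notation "x ⋅ y" := (mmul x y) (at level 40, left associativity).
Local Notation EM := (emul (HC HM)).
Local Notation E1 := (eone M).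
Local Notation T := (tauA HM chi (X := X)).
Local Notation tS := (tauS HM chi (X := X)).

Definition ile (a b : idm M) := EM a b = a.

Lemma le_EM a b c : ile a b -> ile a c -> ile a (EM b c).
Proof. rewrite /ile => H1 H2; by rewrite EMA H1 H2. Qed.

Lemma le_big (I : finType) (P : pred I) (f : I -> idm M) a :
  (forall i, P i -> ile a (f i)) -> ile a (\big[EM/E1]_(i | P i) f i).
Proof.
move=> H; apply: (big_ind (ile a)) => //; last by move=> x y; apply: le_EM.
by rewrite /ile EMr1.
Qed.

Lemma le_antisym a b : ile a b -> ile b a -> a = b.
Proof. rewrite /ile => H1 H2; by rewrite -H1 EMC H2. Qed.

Variables (gv : vert X -> vert X) (ge : edge X -> edge X) (H : {set edge X}).
Hypotheses (ga : forall e, alpha (ge e) = gv (alpha e))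
  (go : forall e, omega (ge e) = gv (omega e))
  (gl : forall e, lambda (ge e) = lambda e)
  (gH : forall e, ge e \notin H).

Lemma lemT n F x : ile (tS H (gv x)) (T n F x).
Proof.
elim: n F x => [|n IH] F x; first by rewrite /ile /= EMr1.
rewrite /=; apply: le_EM; apply: le_big => i /andP [HiF /eqP Hix].
- have He2 := gH i.
  rewrite -Hix -ga (cut_out HM chi Hac He2).
  have IHi := IH (i |: F) (omega i).
  rewrite -go (cut_in HM chi Hac He2) in IHi.
  rewrite /ile; apply: ival_inj; rewrite /= gl.
  apply: alg_out => //; try exact: iP.
  by move/(congr1 (@ival M)): IHi; rewrite /= gl.
- have He2 := gH i.
  rewrite -Hix -go (cut_in HM chi Hac He2).
  have IHi := IH (i |: F) (alpha i).
  rewrite -ga (cut_out HM chi Hac He2) in IHi.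
  rewrite /ile; apply: ival_inj; rewrite /= gl.
  apply: alg_in => //; try exact: iP.
  by move/(congr1 (@ival M)): IHi; rewrite /= gl.
Qed.

End LemT.

Section Reroot.
Variable Sigma : Type.
Variable M : monoid.
Hypothesis HM : adequate M.
Variable chi : Sigma -> M.
Variable X : sgraph Sigma.
Hypothesis Hac : uacyclic X.
Local Notation "x ⋅ y" := (mmul x y) (at level 40, left associativity).
Local Notation EM := (emul (HC HM)).
Local Notation pl := (@mplus M).
Local Notation tS := (tauS HM chi (X := X)).
Variables (H : {set edge X}) (u0 w0 : vert X) (s : seq (edge X)).
Hypotheses (Hs : dpath u0 s w0) (HsH : all (fun e => e \notin H) s).

Local Notation Tr := [set x in s].
Local Notation Av v := (tS (H :|: Tr) v).
Definition lq (q : seq (edge X)) :=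
  [seq (chi (lambda e), ival (Av (omega e))) | e <- q].
Local Notation vtx p := (last u0 (map (@omega _ X) p)).

Lemma set_cat (a b : seq (edge X)) : [set x in a ++ b] = [set x in a] :|: [set x in b].
Proof. by apply/setP => x; rewrite !inE mem_cat. Qed.
Lemma set_cons e (a : seq (edge X)) : [set x in e :: a] = e |: [set x in a].
Proof. by apply/setP => x; rewrite !inE. Qed.
Lemma set_rcons e (a : seq (edge X)) : [set x in rcons a e] = e |: [set x in a].
Proof. by apply/setP => x; rewrite !inE mem_rcons inE. Qed.
Lemma set_nil : [set x in [::] : seq (edge X)] = set0.
Proof. by apply/setP => x; rewrite !inE. Qed.

Lemma split_facts p e q : s = p ++ e :: q ->
  [/\ dpath u0 p (alpha e), dpath (omega e) q w0, e \notin p, e \notin q & e \notin H].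
Proof.
move=> Hsp; have Hs' := Hs; have HsH' := HsH; rewrite Hsp in Hs' HsH'.
have [Hp Hq] := dpath_split Hs'.
split => //.
- exact: (dpath_notin2 Hac Hp).
- exact: (dpath_notin Hac Hq (erefl _)).
- by move: HsH'; rewrite all_cat /= => /and3P [].
Qed.

Lemma vtx_alpha p e q : s = p ++ e :: q -> vtx p = alpha e.
Proof. by move=> /split_facts [Hp _ _ _ _]; rewrite -(dpath_last Hp). Qed.

Lemma irr_left (F : {set edge X}) p e q x : s = p ++ e :: q -> e \in F -> x \in u0 :: map (@omega _ X) p ->
  tS (F :|: [set y in q]) x = tS F x.
Proof.
move=> Hsp HeF Hx; rewrite /tauS irr_seq // => e' He' _.
have Hsep : ~~ connect (adj_minus [set e]) x (alpha e').
  apply: (sep Hac (p := p) (q := q)); first by rewrite -Hsp; exact: Hs.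
  - exact: Hx.
  have [_ Hq _ _ _] := split_facts Hsp; exact: alpha_in Hq He'.
apply: contra Hsep; apply: conn_mono; by rewrite sub1set.
Qed.

Lemma irr_right (F : {set edge X}) p e q y : s = p ++ e :: q -> e \in F -> y \in omega e :: map (@omega _ X) q ->
  tS (F :|: [set z in p]) y = tS F y.
Proof.
move=> Hsp HeF Hy; rewrite /tauS irr_seq // => e' He' _.
have Hsep : ~~ connect (adj_minus [set e]) (alpha e') y.
  apply: (sep Hac (p := p) (q := q)); first by rewrite -Hsp; exact: Hs.
  - have [Hp _ _ _ _] := split_facts Hsp; exact: alpha_in Hp He'.
  - exact: Hy.
rewrite conn_sym; apply: contra Hsep; apply: conn_mono; by rewrite sub1set.
Qed.

Lemma RgtL q p : s = p ++ q ->
  ival (tS (H :|: [set x in p]) (vtx p)) = Rgt (ival (Av (vtx p))) (lq q).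
Proof.
elim: q p => [|e q IH] p Hsp.
  by rewrite /= Hsp cats0.
have [Hp Hq HeP HeQ HeH] := split_facts Hsp.
have Hv := vtx_alpha Hsp.
have HeF : e \notin H :|: [set x in p] by rewrite inE negb_or HeH inE.
rewrite Hv (cut_out HM chi Hac HeF) /=.
have Hsp' : s = rcons p e ++ q by rewrite Hsp cat_rcons.
have := IH _ Hsp'; rewrite map_rcons last_rcons => <-.
have -> : e |: (H :|: [set x in p]) = H :|: [set x in rcons p e].
  by rewrite set_rcons setUCA.
congr (_ ⋅ pl (_ ⋅ _)).
rewrite -(irr_left (F := H :|: [set x in rcons p e]) (p := p) (e := e) (q := q)) //.
- by rewrite Hsp' set_cat setUA.
- by rewrite !inE mem_rcons mem_head orbT.
- by rewrite -Hv mem_last.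
Qed.

Lemma ClaimL q p (L : M) : s = p ++ q ->
  ival (tS (H :|: [set x in q]) (vtx p)) = L ⋅ ival (Av (vtx p)) ->
  ival (tS H (vtx p)) ⋅ \big[@mmul M/mone M]_(e <- q) (chi (lambda e) ⋅ ival (tS H (omega e)))
  = TP L (ival (Av (vtx p))) (lq q).
Proof.
elim: q p L => [|e q IH] p L Hsp HL.
  by rewrite big_nil mmul1r /= -HL set_nil setU0.
have [Hp Hq HeP HeQ HeH] := split_facts Hsp.
have Hv := vtx_alpha Hsp.
have Hsp' : s = rcons p e ++ q by rewrite Hsp cat_rcons.
have Hw : vtx (rcons p e) = omega e by rewrite map_rcons last_rcons.
have E1 : ival (tS (e |: H) (alpha e)) = L ⋅ ival (Av (alpha e)).
  rewrite -Hv -HL -(irr_left (F := e |: H) (p := p) (e := e) (q := q)) //.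
  - by rewrite set_cons setUCA setUA.
  - by rewrite !inE eqxx.
  - by rewrite mem_last.
have E2 : ival (tS (e |: H) (omega e)) = Rgt (ival (Av (omega e))) (lq q).
  rewrite -Hw -(RgtL Hsp') Hw -(irr_right (F := e |: H) (p := p) (e := e) (q := q)) //.
  - by rewrite set_rcons setUCA setUA.
  - by rewrite !inE eqxx.
  - by rewrite mem_head.
have E3 : ival (tS (H :|: [set x in q]) (omega e)) =
          mstar (L ⋅ ival (Av (alpha e)) ⋅ chi (lambda e)) ⋅ ival (Av (omega e)).
  have HeF : e \notin H :|: [set x in q] by rewrite inE negb_or HeH inE.
  rewrite (cut_in HM chi Hac HeF) /=.
  have Hset : e |: (H :|: [set x in q]) = H :|: [set x in e :: q].
    by rewrite set_cons setUCA.
  rewrite Hset -Hv HL Hv; congr (_ ⋅ _).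
  rewrite -(irr_right (F := H :|: [set x in e :: q]) (p := p) (e := e) (q := q)) //.
  - by rewrite Hsp set_cat [[set x in p] :|: _]setUC setUA.
  - by rewrite !inE eqxx orbT.
  - by rewrite mem_head.
have IH' := IH _ _ Hsp'; rewrite Hw in IH'.
rewrite big_cons Hv (cut_out HM chi Hac HeH) /= E1 E2.
rewrite -(mmulA (chi (lambda e))) (IH' _ E3).
by rewrite mmulA.
Qed.

Lemma allI_lq q : allI (lq q).
Proof. elim: q => [//|e q IH] /=; split => //; exact: iP. Qed.

Lemma reroot :
  ival (tS H u0) ⋅ \big[@mmul M/mone M]_(e <- s) (chi (lambda e) ⋅ ival (tS H (omega e))) =
  ival (Av u0) ⋅ \big[@mmul M/mone M]_(e <- s) (chi (lambda e) ⋅ ival (Av (omega e))).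
Proof.
have := @ClaimL s [::] (mone M) erefl; rewrite /= mmul1l => /(_ erefl) ->.
rewrite -[TP _ _ _]mmul1l TP_W ?mmul1l //; last exact: allI_lq.
- by rewrite /Wval big_map.
- exact: idem1.
- exact: iP.
Qed.

End Reroot.

Section Final.
Variable Sigma : Type.
Variable M : monoid.
Hypothesis HM : adequate M.
Variable chi : Sigma -> M.
Local Notation "x ⋅ y" := (mmul x y) (at level 40, left associativity).

Lemma tau_compN (G : sgraph Sigma) (F : {set edge G}) (v : vert G) N :
  #|edge G| <= N -> tau chi (component F v) = ival (tauA HM chi N F v).
Proof.
move=> HN.
have HC : #|edge (component F v)| <= #|edge G|.
  apply: (leq_card (fun e : edge (component F v) => val e)) => x y; exact: val_inj.
rewrite /tau (tau_fuelE HM) (@tauA_stable _ _ HM chi _ _ N) //.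
- by rewrite comp_embed imset0 setU0.
- exact: max_card.
- apply: leq_trans (max_card _) _; exact: leq_trans HC HN.
Qed.

Lemma dpath_morph (A B : sgraph Sigma) (mv : vert A -> vert B) (me : edge A -> edge B)
  (ha : forall e, alpha (me e) = mv (alpha e)) (ho : forall e, omega (me e) = mv (omega e))
  u s w : dpath u s w -> dpath (mv u) (map me s) (mv w).
Proof.
elim: s u => [|e s IH] u; first by move=> /eqP ->; rewrite /dpath /= eqxx.
rewrite !dpath_cons /= => /andP [/eqP Ha Hd].
by rewrite ha Ha eqxx /= ho IH.
Qed.

Lemma dpath_inj (A B : sgraph Sigma) (mv : vert A -> vert B) (me : edge A -> edge B)
  (hinj : injective mv)
  (ha : forall e, alpha (me e) = mv (alpha e)) (ho : forall e, omega (me e) = mv (omega e))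
  u s w : dpath (mv u) (map me s) (mv w) -> dpath u s w.
Proof.
elim: s u => [|e s IH] u; first by rewrite /dpath /= (inj_eq hinj).
rewrite !dpath_cons /= ha (inj_eq hinj) ho => /andP [-> /IH]; by [].
Qed.

Lemma trunk_spec (X : sgraph Sigma) : (exists s, dpath (startv X) s (endv X)) ->
  dpath (startv X) (trunk X) (endv X).
Proof.
move=> [s Hs]; rewrite /trunk.
apply: (epsilon_spec (inhabits [::]) (fun s => dpath (startv X) s (endv X))).
by exists s.
Qed.

Lemma imset_seq (A B : finType) (f : A -> B) (s : seq A) :
  f @: [set x in s] = [set x in map f s].
Proof.
apply/setP => y; rewrite inE; apply/imsetP/mapP => -[x Hx ->]; exists x => //.
  by rewrite inE in Hx.
by rewrite inE.
Qed.

End Final.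

Local Notation "x ⋅ y" := (mmul x y) (at level 40, left associativity).

Theorem corollary5p13 (Sigma : Type) (M : monoid) (HM : adequate M)
  (chi : Sigma -> M) (X Y : sgraph Sigma) (HX : is_tree X)
  (fv : vert X -> vert X) (fe : edge X -> edge X)
  (Hr : is_retraction fv fe)
  (Hp : pruned (retract Hr))
  (Hiso : isomorphic (retract Hr) Y) :
  rho chi X = rho chi Y.
Proof.
have [_ Hac Hex] := HX.
have [[Ha Ho Hl Hst Hen] Hfv Hfe] := Hr.
set N := #|edge X|.
have HtrX := trunk_spec Hex.
set Tx := [set e in trunk X].
have Hmap : map fe (trunk X) = trunk X.
  apply: (dpath_uniq Hac _ HtrX).
  by rewrite -{1}Hst -Hen; apply: dpath_morph.
have Htr_in : forall e, e \in trunk X -> e \in codom fe.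
  by move=> e; rewrite -Hmap => /mapP [e' _ ->]; exact: codom_f.
set G0 := [set e | e \notin codom fe].
have HtrG0 : all (fun e => e \notin G0) (trunk X).
  by apply/allP => e He; rewrite inE negbK Htr_in.
(* sigma = tau on the retract *)
have Hsig : forall v, v \in codom fv ->
    tauS HM chi G0 v = tauS HM chi set0 v.
  move=> v /codomP [v' ->].
  apply: le_antisym.
  - have HG : forall e, fe e \notin G0 by move=> e; rewrite inE negbK codom_f.
    have := lemT HM chi Hac Ha Ho Hl HG N set0 (fv v').
    by rewrite Hfv.
  - have := lemT HM chi Hac (gv := id) (ge := id) (H := set0) (fun e => erefl) (fun e => erefl)
      (fun e => erefl) (fun e => negbT (in_set0 _)) #|edge X| G0 (fv v').
    by [].
have RX : rho chi X = ival (tauS HM chi set0 (startv X)) ⋅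
   \big[@mmul M/mone M]_(e <- trunk X) (chi (lambda e) ⋅ ival (tauS HM chi set0 (omega e))).
  rewrite /rho (tau_compN HM chi _ _ (leqnn N)).
  under eq_bigr => e _ do rewrite (tau_compN HM chi _ _ (leqnn N)).
  rewrite (reroot HM chi Hac HtrX (H := set0)) ?set0U //.
  by apply/allP => e _; rewrite in_set0.
have [fv' [fe' [[Ha' Ho' Hl' Hs' He'] Hbv Hbe]]] := Hiso.
have [ge Hge1 Hge2] := Hbe.
have [gv Hgv1 Hgv2] := Hbv.
pose psi := fun e : edge Y => val (ge e).
pose phi := fun y : vert Y => val (gv y).
have Hpa : forall e, alpha (psi e) = phi (alpha e).
  by move=> e; have := Ha' (ge e); rewrite Hge2 /phi => ->; rewrite Hgv1.
have Hpo : forall e, omega (psi e) = phi (omega e).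
  by move=> e; have := Ho' (ge e); rewrite Hge2 /phi => ->; rewrite Hgv1.
have Hpl : forall e, lambda (psi e) = lambda e.
  by move=> e; have := Hl' (ge e); rewrite Hge2 => ->.
have Hps : phi (startv Y) = startv X by rewrite /phi -Hs' Hgv1.
have Hpe : phi (endv Y) = endv X by rewrite /phi -He' Hgv1.
pose sR := pmap insub (trunk X) : seq (edge (retract Hr)).
have HsR : map val sR = trunk X.
  rewrite /sR; elim: (trunk X) Htr_in => [//|a l IH] Hin /=.
  have Hal : a \in codom fe by apply: Hin; rewrite inE eqxx.
  rewrite (insubT (fun x => x \in codom fe) Hal) /= IH // => e He.
  by apply: Hin; rewrite inE He orbT.
have HdR : dpath (startv (retract Hr)) sR (endv (retract Hr)).
  have Hd := HtrX; rewrite -HsR in Hd.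
  have := (@dpath_inj _ (retract Hr) X (val : vert (retract Hr) -> vert X)
     (val : edge (retract Hr) -> edge X) val_inj (fun e => erefl) (fun e => erefl)
     (startv (retract Hr)) sR (endv (retract Hr))).
  by apply; exact: Hd.
have HtrY : dpath (startv Y) (trunk Y) (endv Y).
  apply: trunk_spec; exists (map fe' sR); rewrite -Hs' -He'.
  exact: dpath_morph.
have Hmap' : map psi (trunk Y) = trunk X.
  apply: (dpath_uniq Hac _ HtrX); rewrite -Hps -Hpe; exact: dpath_morph.
set TY := [set e in trunk Y].
have HNY : #|edge Y| <= N.
  rewrite -(bij_eq_card Hbe); apply: (leq_card (val : edge (retract Hr) -> edge X)).
  exact: val_inj.
have HieF : forall e : edge (retract Hr), val e \notin G0.
  by move=> e; rewrite inE negbK (valP e).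
have Hcov : forall (h : vert (retract Hr)) (e : edge X), e \notin G0 ->
    alpha e = val h \/ omega e = val h -> exists e' : edge (retract Hr), val e' = e.
  by move=> h e; rewrite inE negbK => He _; exists (exist _ e He).
have Htrans : forall y, tauA HM chi N TY y = tauA HM chi N (G0 :|: Tx) (phi y).
  move=> y.
  have E1 := @tauA_embed _ _ HM chi (retract Hr) Y fv' fe' set0 (bij_inj Hbv) (bij_inj Hbe)
    Ha' Ho' Hl' (fun e => negbT (in_set0 _)) (fun h e _ _ => ex_intro _ (ge e) (Hge2 e))
    N (ge @: TY) (gv y).
  have E2 := @tauA_embed _ _ HM chi (retract Hr) X (val : vert (retract Hr) -> vert X)
    (val : edge (retract Hr) -> edge X) G0 val_inj val_inj (fun e => erefl) (fun e => erefl)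
    (fun e => erefl) HieF Hcov N (ge @: TY) (gv y).
  rewrite Hgv2 set0U -imset_comp (eq_imset _ Hge2) imset_id in E1.
  rewrite -E1 E2 -imset_comp.
  have -> : [set (val \o ge) x | x in TY] = Tx.
    by rewrite (imset_seq psi) Hmap'.
  by [].
rewrite RX /rho /= (@tau_compN _ _ HM chi Y _ _ N HNY).
rewrite (eq_bigr (fun e => chi (lambda e) ⋅ ival (tauA HM chi N TY (omega e)))); last first.
  move=> e _; by rewrite (@tau_compN _ _ HM chi Y [set e0 in trunk Y] (omega e) N HNY).
rewrite -/TY.
rewrite Htrans Hps.
rewrite (eq_bigr (fun e => chi (lambda (psi e)) ⋅ ival (tauS HM chi (G0 :|: Tx) (omega (psi e))))); last first.
  by move=> e _; rewrite Htrans -Hpo Hpl.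
rewrite -(big_map psi xpredT (fun e => chi (lambda e) ⋅ ival (tauS HM chi (G0 :|: Tx) (omega e)))).
rewrite Hmap' -(reroot HM chi Hac HtrX HtrG0).
congr (_ ⋅ _); first by rewrite Hsig // -Hst codom_f.
apply: eq_big_seq => e He; rewrite Hsig //.
by have /codomP [e' ->] := Htr_in e He; rewrite Ho codom_f.
Qed.
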